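(* Let $H_1,H_2$ be separable Hilbert spaces, $K\in B(H_1)$, $L\in B(H_2)$. Let $\{x_n\}_{n\geqslant1}$ be a $K$-frame for $H_1$ and $\{y_n\}_{n\geqslant1}$ an $L$-frame for $H_2$, with analysis operators $\theta_1$ and $\theta_2$ respectively. If $\overline{R(\theta_1)}=R(\theta_2)^\perp$ in $\ell^2$, then $\{x_n\oplus y_n\}_{n\geqslant1}$ is a $K\oplus L$-minimal frame for $H_1\oplus H_2$.
   Context: $H_1\oplus H_2$ is the Hilbert space of pairs $x\oplus y$ with inner product $\langle x\oplus y,a\oplus b\rangle=\langle x,a\rangle+\langle y,b\rangle$; $(K\oplus L)(x\oplus y)=K(x)\oplus L(y)$. For a Hilbert space $H$ and $K\in B(H)$, $\{z_n\}_{n\geqslant1}$ is a $K$-frame if there are $A,B>0$ with $A\|K^*z\|^2\leq\sum_n|\langle z,z_n\rangle|^2\leq B\|z\|^2$ for all $z\in H$. Its analysis operator is $\theta:H\to\ell^2$, $\theta(z)=\{\langle z,z_n\rangle\}_n$, and its synthesis operator is $T=\theta^*:\ell^2\to H$, $T(\{a_n\})=\sum_na_nz_n$. A $K$-frame is $K$-minimal if its synthesis operator is injective. $R(\cdot)$ denotes range. *)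

(* Defs.v *)
From Stdlib Require Import Reals.
From Coquelicot Require Import Coquelicot.
Set Implicit Arguments.

Local Open Scope R_scope.

(* A complex inner-product space: raw data.  Hilbert-space axioms are
   the separate predicate [is_hilbert] below. Scalars are complex numbers. *)
Record IPS := {
  car :> Type;
  vzero : car;
  vadd : car -> car -> car;
  vopp : car -> car;
  vscal : C -> car -> car;
  inner : car -> car -> C   (* linear in the first argument *)
}.

Definition vsub {H : IPS} (x y : H) : H := vadd H x (vopp H y).

Definition hnorm {H : IPS} (x : H) : R := sqrt (Re (inner H x x)).

Definition is_hilbert (H : IPS) : Prop :=
  (forall x y z : H, vadd H x (vadd H y z) = vadd H (vadd H x y) z) /\
  (forall x y : H, vadd H x y = vadd H y x) /\
  (forall x : H, vadd H x (vzero H) = x) /\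
  (forall x : H, vadd H x (vopp H x) = vzero H) /\
  (forall x : H, vscal H (RtoC 1) x = x) /\
  (forall (a b : C) (x : H), vscal H a (vscal H b x) = vscal H (a * b)%C x) /\
  (forall (a : C) (x y : H), vscal H a (vadd H x y) = vadd H (vscal H a x) (vscal H a y)) /\
  (forall (a b : C) (x : H), vscal H (a + b)%C x = vadd H (vscal H a x) (vscal H b x)) /\
  (forall (a : C) (x y z : H),
      inner H (vadd H (vscal H a x) y) z = (a * inner H x z + inner H y z)%C) /\
  (forall x y : H, inner H x y = Cconj (inner H y x)) /\
  (forall x : H, 0 <= Re (inner H x x)) /\
  (forall x : H, inner H x x = RtoC 0 -> x = vzero H) /\
  (forall u : nat -> H,
      (forall eps, 0 < eps -> exists N, forall m n, (N <= m)%nat -> (N <= n)%nat ->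
          hnorm (vsub (u m) (u n)) < eps) ->
      exists l : H, forall eps, 0 < eps -> exists N, forall n, (N <= n)%nat ->
          hnorm (vsub (u n) l) < eps).

Definition separable (H : IPS) : Prop :=
  exists d : nat -> H, forall (x : H) eps, 0 < eps -> exists n, hnorm (vsub x (d n)) < eps.

Definition bounded_op {H : IPS} (K : H -> H) : Prop :=
  (forall (a : C) (x y : H), K (vadd H (vscal H a x) y) = vadd H (vscal H a (K x)) (K y)) /\
  (exists M, forall x : H, hnorm (K x) <= M * hnorm x).

Definition is_adjoint {H : IPS} (K Kadj : H -> H) : Prop :=
  forall x y : H, inner H (K x) y = inner H x (Kadj y).

Definition dsum (H1 H2 : IPS) : IPS := {|
  car := (car H1 * car H2)%type;
  vzero := (vzero H1, vzero H2);
  vadd := fun p q => (vadd H1 (fst p) (fst q), vadd H2 (snd p) (snd q));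
  vopp := fun p => (vopp H1 (fst p), vopp H2 (snd p));
  vscal := fun a p => (vscal H1 a (fst p), vscal H2 a (snd p));
  inner := fun p q => (inner H1 (fst p) (fst q) + inner H2 (snd p) (snd q))%C
|}.

Definition dsum_op {H1 H2 : IPS} (K : H1 -> H1) (L : H2 -> H2) : dsum H1 H2 -> dsum H1 H2 :=
  fun p => (K (fst p), L (snd p)).

Definition dsum_seq {H1 H2 : IPS} (x : nat -> H1) (y : nat -> H2) : nat -> dsum H1 H2 :=
  fun n => (x n, y n).

Definition l2 (a : nat -> C) : Prop := ex_series (fun n => (Cmod (a n))^2).

Definition l2dist (a b : nat -> C) : R := sqrt (Series (fun n => (Cmod (a n - b n)%C)^2)).

Definition l2inner (a b : nat -> C) : C :=
  (Series (fun n => Re (a n * Cconj (b n))%C), Series (fun n => Im (a n * Cconj (b n))%C)).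

Definition analysis {H : IPS} (z : nat -> H) (v : H) : nat -> C := fun n => inner H v (z n).

Definition in_range_analysis {H : IPS} (z : nat -> H) (a : nat -> C) : Prop :=
  exists v : H, forall n, a n = analysis z v n.

Definition in_closure_range {H : IPS} (z : nat -> H) (a : nat -> C) : Prop :=
  l2 a /\ forall eps, 0 < eps -> exists v : H, l2dist a (analysis z v) < eps.

Definition in_perp_range {H : IPS} (z : nat -> H) (a : nat -> C) : Prop :=
  l2 a /\ forall b, in_range_analysis z b -> l2inner a b = RtoC 0.

Definition is_K_frame {H : IPS} (K : H -> H) (z : nat -> H) : Prop :=
  exists Kadj : H -> H, is_adjoint K Kadj /\
  exists A B : R, 0 < A /\ 0 < B /\
    forall v : H,
      ex_series (fun n => (Cmod (inner H v (z n)))^2) /\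
      A * (hnorm (Kadj v))^2 <= Series (fun n => (Cmod (inner H v (z n)))^2) /\
      Series (fun n => (Cmod (inner H v (z n)))^2) <= B * (hnorm v)^2.

Fixpoint psum {H : IPS} (a : nat -> C) (z : nat -> H) (N : nat) : H :=
  match N with
  | O => vzero H
  | S N' => vadd H (psum a z N') (vscal H (a N') (z N'))
  end.

(* synthesis operator T : l^2 -> H, T a = v means sum_n a_n z_n converges to v in norm *)
Definition synthesis_maps {H : IPS} (z : nat -> H) (a : nat -> C) (v : H) : Prop :=
  l2 a /\ forall eps, 0 < eps -> exists N, forall M, (N <= M)%nat ->
    hnorm (vsub (psum a z M) v) < eps.

Definition synthesis_injective {H : IPS} (z : nat -> H) : Prop :=
  forall (a b : nat -> C) (v : H),
    synthesis_maps z a v -> synthesis_maps z b v -> forall n, a n = b n.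

Definition is_K_minimal_frame {H : IPS} (K : H -> H) (z : nat -> H) : Prop :=
  is_K_frame K z /\ synthesis_injective z.

(* Main.v *)
Require Import Defs.
From Stdlib Require Import Reals Lra Lia.
From Coquelicot Require Import Coquelicot.
Local Open Scope R_scope.
Set Implicit Arguments.

Ltac ceq := apply injective_projections; simpl; ring.

Section Alg.
Variable H : IPS.
Variable hH : is_hilbert H.

Lemma inner_lin (a : C) (x y z : H) :
  inner H (vadd H (vscal H a x) y) z = (a * inner H x z + inner H y z)%C.
Proof. destruct hH as (_&_&_&_&_&_&_&_&h&_). apply h. Qed.
Lemma inner_conj (x y : H) : inner H x y = Cconj (inner H y x).
Proof. destruct hH as (_&_&_&_&_&_&_&_&_&h&_). apply h. Qed.
Lemma inner_pos (x : H) : 0 <= Re (inner H x x).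
Proof. destruct hH as (_&_&_&_&_&_&_&_&_&_&h&_). apply h. Qed.
Lemma vadd0 (x : H) : vadd H x (vzero H) = x.
Proof. destruct hH as (_&_&h&_). apply h. Qed.
Lemma vscal1 (x : H) : vscal H (RtoC 1) x = x.
Proof. destruct hH as (_&_&_&_&h&_). apply h. Qed.
Lemma vaddC (x y : H) : vadd H x y = vadd H y x.
Proof. destruct hH as (_&h&_). apply h. Qed.
Lemma vaddN (x : H) : vadd H x (vopp H x) = vzero H.
Proof. destruct hH as (_&_&_&h&_). apply h. Qed.

Lemma inner0 z : inner H (vzero H) z = RtoC 0.
Proof.
  pose proof (inner_lin (RtoC 1) (vzero H) (vzero H) z) as e.
  rewrite vscal1, vadd0 in e.
  destruct (inner H (vzero H) z) as [p q].
  apply injective_projections; simpl;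
  [apply (f_equal fst) in e | apply (f_equal snd) in e]; simpl in e; lra.
Qed.

Lemma innerD x y z : inner H (vadd H x y) z = (inner H x z + inner H y z)%C.
Proof.
  rewrite <- (vscal1 x) at 1. rewrite inner_lin.
  destruct (inner H x z), (inner H y z). ceq.
Qed.

Lemma innerZ a x z : inner H (vscal H a x) z = (a * inner H x z)%C.
Proof.
  rewrite <- (vadd0 (vscal H a x)). rewrite inner_lin, inner0.
  destruct (inner H x z), a. ceq.
Qed.

Lemma innerN x z : inner H (vopp H x) z = (- inner H x z)%C.
Proof.
  pose proof (innerD x (vopp H x) z) as e. rewrite vaddN, inner0 in e.
  destruct (inner H x z) as [p q], (inner H (vopp H x) z) as [r s].
  apply injective_projections; simpl;
  [apply (f_equal fst) in e | apply (f_equal snd) in e]; simpl in e; lra.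
Qed.

Lemma Re_sym x y : Re (inner H x y) = Re (inner H y x).
Proof. rewrite (inner_conj x y). destruct (inner H y x). reflexivity. Qed.

Lemma cs_est (s : R) u w :
  2 * s * Re (inner H u w) <= s * s * Re (inner H u u) + Re (inner H w w).
Proof.
  set (p := vadd H (vscal H (RtoC s) u) (vopp H w)).
  pose proof (inner_pos p) as hp.
  assert (e : Re (inner H p p) = s * Re (inner H u p) - Re (inner H w p)).
  { unfold p at 1. rewrite innerD, innerZ, innerN.
    destruct (inner H u p), (inner H w p). simpl. ring. }
  assert (e1 : Re (inner H u p) = s * Re (inner H u u) - Re (inner H u w)).
  { rewrite (Re_sym u w), (Re_sym u p). unfold p. rewrite innerD, innerZ, innerN.
    destruct (inner H u u), (inner H w u). simpl. ring. }
  assert (e2 : Re (inner H w p) = s * Re (inner H w u) - Re (inner H w w)).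
  { rewrite (Re_sym w p), (Re_sym w u). unfold p. rewrite innerD, innerZ, innerN.
    destruct (inner H u w), (inner H w w). simpl. ring. }
  rewrite e, e1, e2, (Re_sym w u) in hp. nra.
Qed.

End Alg.

Lemma re_lim (H : IPS) (hH : is_hilbert H) (u : nat -> H) :
  (forall eps, 0 < eps -> exists N, forall M, (N <= M)%nat -> hnorm (u M) < eps) ->
  forall w, is_lim_seq (fun M => Re (inner H (u M) w)) 0.
Proof.
  intros hu w. apply is_lim_seq_spec. intros [eps heps]. simpl.
  set (W := Re (inner H w w)).
  assert (hW : 0 <= W) by apply (inner_pos hH).
  set (S := (W + 1) / eps).
  assert (hS : 0 < S) by (unfold S; apply Rdiv_lt_0_compat; lra).
  assert (hSe : S * eps = W + 1) by (unfold S; field; lra).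
  destruct (hu (Rmin 1 (eps / S))) as [N hN].
  { apply Rmin_pos; [lra | apply Rdiv_lt_0_compat; lra]. }
  exists N. intros M hM. specialize (hN M hM).
  set (h := hnorm (u M)) in *.
  assert (h0 : 0 <= h) by apply sqrt_pos.
  assert (hq : Re (inner H (u M) (u M)) = h * h).
  { unfold h, hnorm. rewrite sqrt_sqrt; [reflexivity | apply (inner_pos hH)]. }
  assert (hm1 := Rmin_l 1 (eps / S)). assert (hm2 := Rmin_r 1 (eps / S)).
  assert (hhh : h * h <= eps / S) by nra.
  assert (hSq : S * (h * h) <= eps).
  { apply (Rmult_le_compat_l S) in hhh; [|lra].
    replace (S * (eps / S)) with eps in hhh by (field; lra). exact hhh. }
  pose proof (cs_est hH S (u M) w) as c1.
  pose proof (cs_est hH (-S) (u M) w) as c2.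
  fold W in c1, c2. rewrite hq in c1, c2.
  set (r := Re (inner H (u M) w)) in *.
  rewrite Rminus_0_r. apply Rabs_def1.
  - assert (2 * S * r < 2 * S * eps) by nra. nra.
  - assert (2 * S * (- r) < 2 * S * eps) by nra. nra.
Qed.

Lemma im_inner (H : IPS) (hH : is_hilbert H) u w :
  Im (inner H u w) = Re (inner H u (vscal H Ci w)).
Proof.
  rewrite (inner_conj hH u (vscal H Ci w)), (innerZ hH), (inner_conj hH w u).
  destruct (inner H u w). simpl. ring.
Qed.

Lemma psum_S (H : IPS) (hH : is_hilbert H) a z w M :
  inner H (psum a z (S M)) w = (inner H (psum a z M) w + a M * inner H (z M) w)%C.
Proof. simpl. rewrite (innerD hH), (innerZ hH). reflexivity. Qed.

Lemma psum_0 (H : IPS) (hH : is_hilbert H) a z w :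
  inner H (psum a z 0) w = RtoC 0.
Proof. simpl. apply (inner0 hH). Qed.

Lemma is_series_lim (a : nat -> R) (l : R) :
  is_lim_seq (sum_n a) l -> is_series a l.
Proof. intro h. exact h. Qed.

Lemma conv_gen (H : IPS) (hH : is_hilbert H) (proj : C -> R)
  (hadd : forall x y, proj (x + y)%C = proj x + proj y)
  (hopp : forall x, proj (- x)%C = - proj x)
  (hzero : proj (RtoC 0) = 0)
  (z : nat -> H) (a b : nat -> C) (v w : H) :
  is_lim_seq (fun M => proj (inner H (vsub (psum a z M) v) w)) 0 ->
  is_lim_seq (fun M => proj (inner H (vsub (psum b z M) v) w)) 0 ->
  is_series (fun n => proj ((a n - b n) * inner H (z n) w)%C) 0.
Proof.
  intros ha hb.
  assert (ex : forall c M, proj (inner H (vsub (psum c z M) v) w)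
            = proj (inner H (psum c z M) w) - proj (inner H v w)).
  { intros c M. unfold vsub. rewrite (innerD hH), (innerN hH), hadd, hopp. ring. }
  assert (ka : is_lim_seq (fun M => proj (inner H (psum a z M) w)) (proj (inner H v w))).
  { apply is_lim_seq_ext with (fun M => proj (inner H (vsub (psum a z M) v) w) + proj (inner H v w)).
    intro M. rewrite ex. ring.
    replace (Finite (proj (inner H v w))) with (Rbar_plus 0 (proj (inner H v w))) by (simpl; f_equal; ring).
    apply is_lim_seq_plus'; [exact ha | apply is_lim_seq_const]. }
  assert (kb : is_lim_seq (fun M => proj (inner H (psum b z M) w)) (proj (inner H v w))).
  { apply is_lim_seq_ext with (fun M => proj (inner H (vsub (psum b z M) v) w) + proj (inner H v w)).
    intro M. rewrite ex. ring.
    replace (Finite (proj (inner H v w))) with (Rbar_plus 0 (proj (inner H v w))) by (simpl; f_equal; ring).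
    apply is_lim_seq_plus'; [exact hb | apply is_lim_seq_const]. }
  apply is_series_lim.
  assert (hs : forall N, sum_n (fun n => proj ((a n - b n) * inner H (z n) w)%C) N
     = proj (inner H (psum a z (S N)) w) - proj (inner H (psum b z (S N)) w)).
  { intro N. induction N.
    - rewrite sum_O, !(psum_S hH), !(psum_0 hH).
      replace ((RtoC 0 + a 0%nat * inner H (z 0%nat) w))%C with (a 0%nat * inner H (z 0%nat) w)%C by ceq.
      replace ((RtoC 0 + b 0%nat * inner H (z 0%nat) w))%C with (b 0%nat * inner H (z 0%nat) w)%C by ceq.
      replace ((a 0%nat - b 0%nat) * inner H (z 0%nat) w)%C with
        (a 0%nat * inner H (z 0%nat) w + - (b 0%nat * inner H (z 0%nat) w))%C by ceq.
      rewrite hadd, hopp. unfold Rminus. reflexivity.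
    - rewrite sum_Sn, IHN. rewrite (psum_S hH a z w (S N)), (psum_S hH b z w (S N)).
      replace ((a (S N) - b (S N)) * inner H (z (S N)) w)%C with
        (a (S N) * inner H (z (S N)) w + - (b (S N) * inner H (z (S N)) w))%C by ceq.
      rewrite !hadd, hopp. unfold plus; simpl. ring. }
  apply is_lim_seq_ext with (fun N => proj (inner H (psum a z (S N)) w) - proj (inner H (psum b z (S N)) w)).
  { intro N. symmetry. apply hs. }
  replace (Finite 0) with (Rbar_minus (proj (inner H v w)) (proj (inner H v w))) by (simpl; f_equal; ring).
  apply is_lim_seq_minus'.
  - apply (is_lim_seq_incr_1 (fun M => proj (inner H (psum a z M) w))). exact ka.
  - apply (is_lim_seq_incr_1 (fun M => proj (inner H (psum b z M) w))). exact kb.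
Qed.

Lemma isR_plus (a b : nat -> R) la lb :
  is_series a la -> is_series b lb -> is_series (fun n => a n + b n) (la + lb).
Proof. intros h1 h2. exact (is_series_plus _ _ _ _ h1 h2). Qed.

Lemma isR_scal (c : R) (a : nat -> R) la :
  is_series a la -> is_series (fun n => c * a n) (c * la).
Proof. intros h1. exact (is_series_scal c _ _ h1). Qed.

Lemma Cmod2 (z : C) : Cmod z ^ 2 = fst z * fst z + snd z * snd z.
Proof. unfold Cmod. rewrite pow2_sqrt; [ring | nra]. Qed.

Lemma sum_n_nonneg (f : nat -> R) : (forall n, 0 <= f n) -> forall N, 0 <= sum_n f N.
Proof.
  intros hf N. induction N.
  - rewrite sum_O. apply hf.
  - rewrite sum_Sn. unfold plus; simpl. specialize (hf (S N)). lra.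
Qed.

Lemma term_le (f : nat -> R) : (forall n, 0 <= f n) -> ex_series f ->
  forall k, f k <= Series f.
Proof.
  intros hf hex k.
  pose proof (Series_correct _ hex) as hs.
  assert (hl : is_lim_seq (sum_n f) (Series f)) by exact hs.
  apply (is_lim_seq_incr_n _ k) in hl.
  assert (hle : forall n, f k <= sum_n f (n + k)).
  { intro n. induction n.
    - simpl. destruct k.
      + rewrite sum_O. lra.
      + rewrite sum_Sn. unfold plus; simpl. pose proof (sum_n_nonneg f hf k). lra.
    - replace (S n + k)%nat with (S (n + k)) by lia.
      rewrite sum_Sn. unfold plus; simpl. specialize (hf (S (n+k))). lra. }
  pose proof (is_lim_seq_le (fun _ => f k) _ _ _ hle (is_lim_seq_const _) hl) as r.
  simpl in r. exact r.
Qed.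

Lemma Series_nonneg (f : nat -> R) : (forall n, 0 <= f n) -> ex_series f -> 0 <= Series f.
Proof. intros hf hex. pose proof (term_le hf hex 0). pose proof (hf 0%nat). lra. Qed.

Definition conv_to {H : IPS} (a : nat -> C) (z : nat -> H) (v : H) : Prop :=
  forall eps, 0 < eps -> exists N, forall M, (N <= M)%nat -> hnorm (vsub (psum a z M) v) < eps.

Lemma ortho (H : IPS) (hH : is_hilbert H) z a b v :
  conv_to a z v -> conv_to b z v -> forall w,
  is_series (fun n => Re ((a n - b n) * Cconj (inner H w (z n)))%C) 0 /\
  is_series (fun n => Im ((a n - b n) * Cconj (inner H w (z n)))%C) 0.
Proof.
  intros ha hb w.
  assert (e : forall n, Cconj (inner H w (z n)) = inner H (z n) w).
  { intro n. symmetry. apply (inner_conj hH). }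
  split.
  - apply is_series_ext with (fun n => Re ((a n - b n) * inner H (z n) w)%C).
    { intro n. rewrite e. reflexivity. }
    eapply (conv_gen hH Re).
    + intros [] []. simpl. ring.
    + intros []. simpl. ring.
    + reflexivity.
    + exact (re_lim hH (fun M => vsub (psum a z M) v) ha w).
    + exact (re_lim hH (fun M => vsub (psum b z M) v) hb w).
  - apply is_series_ext with (fun n => Im ((a n - b n) * inner H (z n) w)%C).
    { intro n. rewrite e. reflexivity. }
    eapply (conv_gen hH Im).
    + intros [] []. simpl. ring.
    + intros []. simpl. ring.
    + reflexivity.
    + apply is_lim_seq_ext with (fun M => Re (inner H (vsub (psum a z M) v) (vscal H Ci w))).
      { intro M. symmetry. apply (im_inner hH). }
      exact (re_lim hH (fun M => vsub (psum a z M) v) ha _).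
    + apply is_lim_seq_ext with (fun M => Re (inner H (vsub (psum b z M) v) (vscal H Ci w))).
      { intro M. symmetry. apply (im_inner hH). }
      exact (re_lim hH (fun M => vsub (psum b z M) v) hb _).
Qed.

Lemma psum_dsum (H1 H2 : IPS) (a : nat -> C) (x : nat -> H1) (y : nat -> H2) M :
  psum a (dsum_seq x y) M = (psum a x M, psum a y M).
Proof. induction M; simpl; [reflexivity | rewrite IHM; reflexivity]. Qed.

Lemma conv_dsum (H1 H2 : IPS) (h1 : is_hilbert H1) (h2 : is_hilbert H2)
  (a : nat -> C) (x : nat -> H1) (y : nat -> H2) (v : dsum H1 H2) :
  conv_to a (dsum_seq x y) v -> conv_to a x (fst v) /\ conv_to a y (snd v).
Proof.
  intros h. split; intros eps heps; destruct (h eps heps) as [N hN]; exists N;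
  intros M hM; specialize (hN M hM); rewrite psum_dsum in hN;
  (eapply Rle_lt_trans; [|exact hN]); unfold hnorm, vsub; simpl; apply sqrt_le_1_alt.
  - pose proof (inner_pos h2 (vadd H2 (psum a y M) (vopp H2 (snd v)))). unfold Re in *. lra.
  - pose proof (inner_pos h1 (vadd H1 (psum a x M) (vopp H1 (fst v)))). unfold Re in *. lra.
Qed.

Definition orth_to {H : IPS} (c : nat -> C) (z : nat -> H) : Prop := forall w : H,
  is_series (fun n => Re (c n * Cconj (inner H w (z n))))%C 0 /\
  is_series (fun n => Im (c n * Cconj (inner H w (z n))))%C 0.

Lemma c_zero (H1 H2 : IPS) (x : nat -> H1) (y : nat -> H2)
  (hxs : forall v, ex_series (fun n => Cmod (inner H1 v (x n)) ^ 2))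
  (hR : forall a : nat -> C, in_closure_range x a <-> in_perp_range y a)
  (c : nat -> C) (hc : l2 c) (ox : orth_to c x) (oy : orth_to c y) :
  forall n, c n = RtoC 0.
Proof.
  assert (perp : in_perp_range y c).
  { split; [exact hc|]. intros b' [w hw]. unfold l2inner.
    destruct (oy w) as [o1 o2].
    rewrite (Series_ext _ (fun n => Re (c n * Cconj (inner H2 w (y n))))%C).
    2:{ intro n. rewrite hw. reflexivity. }
    rewrite (Series_ext (fun n => Im _) (fun n => Im (c n * Cconj (inner H2 w (y n))))%C).
    2:{ intro n. rewrite hw. reflexivity. }
    rewrite (is_series_unique _ _ o1), (is_series_unique _ _ o2). reflexivity. }
  destruct (proj2 (hR c) perp) as [_ happ].
  set (Sc := Series (fun n => Cmod (c n) ^ 2)).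
  assert (hcpos : forall n, 0 <= Cmod (c n) ^ 2) by (intro; apply pow2_ge_0).
  assert (Sc0 : 0 <= Sc) by (apply Series_nonneg; [exact hcpos | exact hc]).
  assert (key : forall v, Sc <= Series (fun n => Cmod (c n - analysis x v n)%C ^ 2)).
  { intro v. unfold analysis.
    set (Sd := Series (fun n => Cmod (inner H1 v (x n)) ^ 2)).
    assert (Sd0 : 0 <= Sd) by (apply Series_nonneg; [intro; apply pow2_ge_0 | apply hxs]).
    assert (hs := isR_plus (isR_plus (Series_correct _ hc) (Series_correct _ (hxs v)))
                   (isR_scal (c:=-2) (proj1 (ox v)))).
    rewrite (Series_ext _ (fun n => Cmod (c n) ^ 2 + Cmod (inner H1 v (x n)) ^ 2 +
                -2 * Re (c n * Cconj (inner H1 v (x n)))%C)).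
    2:{ intro n. rewrite !Cmod2. destruct (c n), (inner H1 v (x n)). simpl. ring. }
    rewrite (is_series_unique _ _ hs). fold Sc Sd. lra. }
  assert (hSc : Sc = 0).
  { destruct (Req_dec Sc 0) as [e|ne]; [exact e|].
    assert (hp : 0 < sqrt Sc) by (apply sqrt_lt_R0; lra).
    destruct (happ _ hp) as [v hv]. unfold l2dist in hv.
    pose proof (sqrt_le_1_alt _ _ (key v)). lra. }
  intro n. apply Cmod_eq_0.
  pose proof (term_le hcpos hc n) as t1. fold Sc in t1. pose proof (hcpos n).
  assert (Cmod (c n) ^ 2 = 0) by lra.
  assert (hh : Cmod (c n) * Cmod (c n) = 0) by (simpl in *; nra). nra.
Qed.

Lemma hnorm2 (H : IPS) (hH : is_hilbert H) (v : H) : hnorm v ^ 2 = Re (inner H v v).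
Proof. unfold hnorm. apply pow2_sqrt. apply (inner_pos hH). Qed.

Lemma hnorm_dsum (H1 H2 : IPS) (h1 : is_hilbert H1) (h2 : is_hilbert H2) (p : dsum H1 H2) :
  hnorm p ^ 2 = hnorm (fst p) ^ 2 + hnorm (snd p) ^ 2.
Proof.
  rewrite (hnorm2 h1), (hnorm2 h2). unfold hnorm. rewrite pow2_sqrt.
  - simpl. reflexivity.
  - simpl. pose proof (inner_pos h1 (fst p)). pose proof (inner_pos h2 (snd p)).
    unfold Re in *. lra.
Qed.

Lemma frame_dsum (H1 H2 : IPS) (h1 : is_hilbert H1) (h2 : is_hilbert H2)
  (K : H1 -> H1) (L : H2 -> H2) (x : nat -> H1) (y : nat -> H2)
  (hx : is_K_frame K x) (hy : is_K_frame L y)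
  (hR : forall a : nat -> C, in_closure_range x a <-> in_perp_range y a) :
  is_K_frame (dsum_op K L) (dsum_seq x y).
Proof.
  destruct hx as [K' [adjK [A1 [B1 [hA1 [hB1 fx]]]]]].
  destruct hy as [L' [adjL [A2 [B2 [hA2 [hB2 fy]]]]]].
  exists (dsum_op K' L'). split.
  { intros p q. unfold dsum_op; simpl. rewrite adjK, adjL. reflexivity. }
  exists (Rmin A1 A2), (B1 + B2). split; [apply Rmin_pos; lra|]. split; [lra|].
  intros [v1 v2].
  destruct (fx v1) as [ex1 [lo1 up1]]. destruct (fy v2) as [ex2 [lo2 up2]].
  set (al := fun n => inner H1 v1 (x n)). set (be := fun n => inner H2 v2 (y n)).
  assert (cl : in_closure_range x al).
  { split; [exact ex1|]. intros eps heps. exists v1.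
    unfold l2dist.
    rewrite (Series_ext _ (fun n => 0 * Cmod (al n) ^ 2)).
    2:{ intro n. unfold analysis, al. rewrite !Cmod2.
        destruct (inner H1 v1 (x n)). simpl. ring. }
    rewrite (is_series_unique (fun n => 0 * Cmod (al n) ^ 2) _ (isR_scal (c:=0) (Series_correct _ ex1))).
    rewrite Rmult_0_l, sqrt_0. exact heps. }
  destruct (proj1 (hR al) cl) as [_ pp].
  assert (o : l2inner al be = RtoC 0) by (apply pp; exists v2; intro n; reflexivity).
  set (cr := fun n => Re (al n * Cconj (be n))%C).
  assert (o0 : Series cr = 0) by (apply (f_equal fst) in o; exact o).
  assert (excr : ex_series cr).
  { apply (@ex_series_le R_AbsRing R_CompleteNormedModule) with (fun n => / 2 * (Cmod (al n) ^ 2 + Cmod (be n) ^ 2)).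
    - intro n. rewrite !Cmod2. unfold norm; simpl. unfold abs; simpl. unfold cr.
      destruct (al n) as [p q], (be n) as [r s]. simpl. apply Rabs_le. pose proof (pow2_ge_0 (p-r)). pose proof (pow2_ge_0 (q-s)). pose proof (pow2_ge_0 (p+r)). pose proof (pow2_ge_0 (q+s)). split; nra.
    - eexists. apply isR_scal. apply isR_plus; apply Series_correct; [exact ex1 | exact ex2]. }
  assert (hs := isR_plus (isR_plus (Series_correct _ ex1) (Series_correct _ ex2))
                 (isR_scal (c:=2) (Series_correct _ excr))).
  rewrite o0 in hs.
  assert (eq : forall n, Cmod (inner (dsum H1 H2) (v1, v2) (dsum_seq x y n)) ^ 2 =
     Cmod (al n) ^ 2 + Cmod (be n) ^ 2 + 2 * cr n).
  { intro n. rewrite !Cmod2. unfold cr, al, be. simpl.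
    destruct (inner H1 v1 (x n)), (inner H2 v2 (y n)). simpl. ring. }
  assert (hs' := is_series_ext _ _ _ (fun n => eq_sym (eq n)) hs).
  rewrite (is_series_unique _ _ hs').
  fold al in lo1, up1. fold be in lo2, up2.
  split; [eexists; exact hs'|].
  rewrite (hnorm_dsum h1 h2 (v1, v2)), (hnorm_dsum h1 h2 (dsum_op K' L' (v1, v2))).
  unfold dsum_op; simpl fst; simpl snd.
  pose proof (Rmin_l A1 A2). pose proof (Rmin_r A1 A2).
  pose proof (pow2_ge_0 (hnorm (K' v1))). pose proof (pow2_ge_0 (hnorm (L' v2))).
  pose proof (pow2_ge_0 (hnorm v1)). pose proof (pow2_ge_0 (hnorm v2)).
  split; nra.
Qed.
Unset Implicit Arguments.

Theorem proposition2p20 (H1 H2 : IPS)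
  (hH1 : is_hilbert H1) (hH2 : is_hilbert H2)
  (sH1 : separable H1) (sH2 : separable H2)
  (K : H1 -> H1) (L : H2 -> H2)
  (hK : bounded_op K) (hL : bounded_op L)
  (x : nat -> H1) (y : nat -> H2)
  (hx : is_K_frame K x) (hy : is_K_frame L y)
  (hR : forall a : nat -> C, in_closure_range x a <-> in_perp_range y a) :
  is_K_minimal_frame (dsum_op K L) (dsum_seq x y).
Proof.
  split; [exact (frame_dsum hH1 hH2 hx hy hR)|].
  intros a b v [la ca] [lb cb] n.
  destruct (conv_dsum hH1 hH2 ca) as [cax cay].
  destruct (conv_dsum hH1 hH2 cb) as [cbx cby].
  assert (hxs : forall v, ex_series (fun n => Cmod (inner H1 v (x n)) ^ 2)).
  { destruct hx as [K0 [_ [A0 [B0 [_ [_ f]]]]]]. intro w. exact (proj1 (f w)). }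
  assert (hc : l2 (fun n => (a n - b n)%C)).
  { unfold l2. apply (@ex_series_le R_AbsRing R_CompleteNormedModule) with
      (fun n => 2 * Cmod (a n) ^ 2 + 2 * Cmod (b n) ^ 2).
    - intro k. rewrite !Cmod2. unfold norm; simpl. unfold abs; simpl.
      destruct (a k) as [p q], (b k) as [r s]. simpl.
      pose proof (pow2_ge_0 (p-r)). pose proof (pow2_ge_0 (q-s)). rewrite Rabs_right; [|nra].
      pose proof (pow2_ge_0 (p+r)). pose proof (pow2_ge_0 (q+s)). nra.
    - eexists. apply isR_plus; apply isR_scal; apply Series_correct; assumption. }
  assert (e := c_zero hxs hR hc (ortho hH1 cax cbx) (ortho hH2 cay cby) n).
  simpl in e. destruct (a n) as [p q], (b n) as [r s].
  injection e. intros. apply injective_projections; simpl; lra.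
Qed.
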